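(* Let $\|\cdot\|_{(1)},\dots,\|\cdot\|_{(k)}$ be norms on a finite-dimensional real inner product space $V$ and let $0\neq x_0\in V$. Define the optimal weights $\mu_i^\ast=1/\|x_0\|_{(i)}$ and, for $\lambda=(\lambda_1,\dots,\lambda_k)$ with all $\lambda_i\ge 0$, the norms $$\|x\|_{\max,\mu^\ast}=\max_{i\in[k]}\mu_i^\ast\|x\|_{(i)},\qquad \|x\|_{\mathrm{sum},\lambda}=\sum_{i\in[k]}\lambda_i\|x\|_{(i)}.$$ Then for every such $\lambda$, $$\mathrm{cone}\,\partial\|\cdot\|_{\mathrm{sum},\lambda}(x_0)\subseteq\mathrm{cone}\,\partial\|\cdot\|_{\max,\mu^\ast}(x_0).$$ In particular $\delta_{\max}(\mu^\ast)\le\delta_{\mathrm{sum}}(\lambda)$, where $\delta_{\max}(\mu^\ast)=\mathbb{E}_g\big[\inf_{y\in \mathrm{cone}\,\partial\|\cdot\|_{\max,\mu^\ast}(x_0)}\|g-y\|_2^2\big]$ and $\delta_{\mathrm{sum}}(\lambda)=\mathbb{E}_g\big[\inf_{y\in \mathrm{cone}\,\partial\|\cdot\|_{\mathrm{sum},\lambda}(x_0)}\|g-y\|_2^2\big]$ with $g$ a standard Gaussian vector in $V$.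
   Context: $\partial h(x_0)$ denotes the subdifferential of a convex function $h$ at $x_0$; $\mathrm{cone}(S)=\{\tau x:x\in S,\ \tau>0\}$; $[k]=\{1,\dots,k\}$. A standard Gaussian vector has i.i.d. $\mathcal N(0,1)$ coordinates in an orthonormal basis of $V$. *)

(* Defs.v *)
(* V = 'rV[R]_n with the standard inner product
   (coordinates in an orthonormal basis), R an arbitrary real field. *)
From HB Require Import structures.
From mathcomp Require Import all_boot all_order all_algebra.
Set Implicit Arguments. Unset Strict Implicit. Unset Printing Implicit Defensive.
Import Order.TTheory GRing.Theory Num.Theory.
Local Open Scope ring_scope.

Definition dotv (R : realFieldType) (n : nat) (x y : 'rV[R]_n) : R :=
  \sum_(j < n) x 0 j * y 0 j.

Definition sqdist (R : realFieldType) (n : nat) (x y : 'rV[R]_n) : R :=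
  dotv (x - y) (x - y).

Definition is_norm (R : realFieldType) (n : nat) (N : 'rV[R]_n -> R) : Prop :=
  [/\ (forall x, 0 <= N x),
      (forall x, N x = 0 -> x = 0),
      (forall (a : R) x, N (a *: x) = `|a| * N x)
    & (forall x y, N (x + y) <= N x + N y)].

Definition subdiff (R : realFieldType) (n : nat) (h : 'rV[R]_n -> R)
    (x0 : 'rV[R]_n) : 'rV[R]_n -> Prop :=
  fun z => forall x, h x0 + dotv z (x - x0) <= h x.

Definition cone (R : realFieldType) (n : nat) (S : 'rV[R]_n -> Prop) :
    'rV[R]_n -> Prop :=
  fun z => exists tau x, 0 < tau /\ S x /\ z = tau *: x.

(* ||x||_{max,mu} = max_i mu_i ||x||_(i)   (0 is the neutral element,
   harmless since all terms are >= 0 when mu >= 0) *)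
Definition norm_max (R : realFieldType) (n k : nat)
    (mu : 'I_k -> R) (N : 'I_k -> 'rV[R]_n -> R) (x : 'rV[R]_n) : R :=
  \big[Num.max/0]_(i < k) (mu i * N i x).

Definition norm_sum (R : realFieldType) (n k : nat)
    (lam : 'I_k -> R) (N : 'I_k -> 'rV[R]_n -> R) (x : 'rV[R]_n) : R :=
  \sum_(i < k) lam i * N i x.

(* Main.v *)
Require Import Defs.
From HB Require Import structures.
From mathcomp Require Import all_boot all_order all_algebra.
Import Order.TTheory GRing.Theory Num.Theory.
Local Open Scope ring_scope.

Lemma bigmax_ge_seq (R : realFieldType) (I : eqType) (s : seq I) (F : I -> R) i :
  i \in s -> F i <= \big[Num.max/0]_(j <- s) F j.
Proof.
elim: s => [//|a s IH]; rewrite inE big_cons => /orP [/eqP->|Hi].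
  by rewrite le_max lexx.
by rewrite le_max (IH Hi) orbT.
Qed.

Lemma bigmax_ge (R : realFieldType) k (F : 'I_k -> R) i :
  F i <= \big[Num.max/0]_(j < k) F j.
Proof. by apply: bigmax_ge_seq; rewrite mem_index_enum. Qed.

Lemma dotvZ (R : realFieldType) n (a : R) (s v : 'rV[R]_n) :
  dotv (a *: s) v = a * dotv s v.
Proof.
rewrite /dotv mulr_sumr; apply: eq_bigr => j _; by rewrite mxE mulrA.
Qed.

Theorem proposition3 (R : realFieldType) (n k : nat)
    (N : 'I_k -> 'rV[R]_n -> R) (HN : forall i, is_norm (N i))
    (x0 : 'rV[R]_n) (Hx0 : x0 != 0)
    (lam : 'I_k -> R) (Hlam : forall i, 0 <= lam i)
    (Hlam_nz : exists i, lam i != 0) :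
  let mu := fun i => (N i x0)^-1 in
  (forall z, cone (subdiff (norm_sum lam N) x0) z ->
             cone (subdiff (norm_max mu N) x0) z)
  /\
  (forall (g : 'rV[R]_n) (r : R),
     (forall y, cone (subdiff (norm_max mu N) x0) y -> r <= sqdist g y) ->
     (forall y, cone (subdiff (norm_sum lam N) x0) y -> r <= sqdist g y)).
Proof.
move=> mu.
have Npos : forall i, 0 < N i x0.
  move=> i; case: (HN i) => H0 H1 _ _; rewrite lt_def H0 andbT.
  by apply/eqP => /H1 /eqP; rewrite (negbTE Hx0).
have Nge : forall i x, 0 <= N i x by move=> i x; case: (HN i).
set c := norm_sum lam N x0.
have cpos : 0 < c.
  case: Hlam_nz => i0 Hi0.
  rewrite /c /norm_sum (bigD1 i0) //=.
  apply: ltr_wpDr; first by apply: sumr_ge0 => j _; apply: mulr_ge0.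
  by apply: mulr_gt0 => //; rewrite lt_def Hi0 Hlam.
have Mx0 : norm_max mu N x0 <= 1.
  rewrite /norm_max; apply: (big_ind (fun x => x <= 1)) => //.
    by move=> a b Ha Hb; rewrite ge_max Ha Hb.
  by move=> i _; rewrite /mu mulVf // gt_eqF.
have Hsum : forall x, norm_sum lam N x <= c * norm_max mu N x.
  move=> x; rewrite /c /norm_sum mulr_suml; apply: ler_sum => i _.
  have -> : lam i * N i x = lam i * N i x0 * (mu i * N i x).
    by rewrite /mu mulrA -(mulrA (lam i)) mulfV ?gt_eqF // mulr1.
  apply: ler_wpM2l; first by apply: mulr_ge0.
  exact: (@bigmax_ge _ _ (fun j => mu j * N j x) i).
have part1 : forall z, cone (subdiff (norm_sum lam N) x0) z ->
             cone (subdiff (norm_max mu N) x0) z.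
  move=> z [tau [s [Htau [Hs ->]]]].
  exists (tau * c), (c^-1 *: s); split; first by apply: mulr_gt0.
  split; last by rewrite scalerA -mulrA mulfV ?gt_eqF // mulr1.
  move=> x; rewrite dotvZ.
  have H1 := Hs x.
  have H2 : c^-1 * dotv s (x - x0) <= c^-1 * norm_sum lam N x - 1.
    rewrite -(mulVf (lt0r_neq0 cpos)) -mulrBr; apply: ler_wpM2l.
      by rewrite invr_ge0 ltW.
    by rewrite lerBrDl.
  have H3 : c^-1 * norm_sum lam N x <= norm_max mu N x.
    by rewrite ler_pdivrMl.
  apply: (le_trans (lerD Mx0 H2)); by rewrite addrC subrK.
split=> // g r H y Hy; apply: H; exact: part1.
Qed.
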